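(* Let $\mathcal{LS}_{\mathfrak{B}_1}\langle X\rangle$ be the free algebra over a field of characteristic $0$ in the variety of left-symmetric algebras satisfying $(ab)c-(ba)c-(ac)b+(ca)b+(bc)a-(cb)a=0$, and equip it with the commutator $[a,b]=ab-ba$. Then every polynomial identity of degree at most $4$ satisfied by $(\mathcal{LS}_{\mathfrak{B}_1}\langle X\rangle,[\cdot,\cdot])$ is a consequence of anticommutativity and the Jacobi identity.
   Context: A left-symmetric algebra is an algebra with $(a,b,c)=(b,a,c)$, where $(a,b,c)=(ab)c-a(bc)$. *)

(* Defs.v *)
From HB Require Import structures.
From mathcomp Require Import all_boot all_order all_algebra.
Set Implicit Arguments. Unset Strict Implicit. Unset Printing Implicit Defensive.
Import GRing.Theory.
Local Open Scope ring_scope.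

Inductive napoly (K : Type) : Type :=
  | pVar of nat
  | pZero
  | pAdd of napoly K & napoly K
  | pScale of K & napoly K
  | pMul of napoly K & napoly K.
Arguments pZero {K}.
Arguments pVar {K} _.

(* Syntactic degree; it bounds the degree of the represented polynomial, and every
   polynomial of degree <= d is represented by an expression of syntactic degree <= d. *)
Fixpoint pdeg (K : Type) (p : napoly K) : nat :=
  match p with
  | pVar _ => 1
  | pZero => 0
  | pAdd p q => maxn (pdeg p) (pdeg q)
  | pScale _ p => pdeg p
  | pMul p q => pdeg p + pdeg q
  end.

Fixpoint peval (K : pzRingType) (V : lmodType K) (m : V -> V -> V) (e : nat -> V)
    (p : napoly K) : V :=
  match p with
  | pVar i => e i
  | pZero => 0
  | pAdd p q => peval m e p + peval m e q
  | pScale c p => c *: peval m e p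
  | pMul p q => m (peval m e p) (peval m e q)
  end.

Definition bilinear_op (K : pzRingType) (V : lmodType K) (m : V -> V -> V) : Prop :=
  [/\ forall a b c, m (a + b) c = m a c + m b c,
      forall a b c, m a (b + c) = m a b + m a c,
      forall (k : K) a b, m (k *: a) b = k *: m a b
    & forall (k : K) a b, m a (k *: b) = k *: m a b].

Definition is_identity (K : pzRingType) (V : lmodType K) (m : V -> V -> V)
    (p : napoly K) : Prop :=
  forall e : nat -> V, peval m e p = 0.

Definition assoc (K : pzRingType) (V : lmodType K) (m : V -> V -> V) (a b c : V) :=
  m (m a b) c - m a (m b c).

Definition left_symmetric (K : pzRingType) (V : lmodType K) (m : V -> V -> V) :=
  forall a b c, assoc m a b c = assoc m b a c.

Definition identity_B1 (K : pzRingType) (V : lmodType K) (m : V -> V -> V) :=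
  forall a b c, m (m a b) c - m (m b a) c - m (m a c) b + m (m c a) b
                + m (m b c) a - m (m c b) a = 0.

Definition LS_B1_algebra (K : pzRingType) (V : lmodType K) (m : V -> V -> V) :=
  [/\ bilinear_op m, left_symmetric m & identity_B1 m].

Definition commutator (K : pzRingType) (V : lmodType K) (m : V -> V -> V) (a b : V) :=
  m a b - m b a.

Definition alg_hom (K : pzRingType) (V W : lmodType K) (mV : V -> V -> V)
    (mW : W -> W -> W) (h : V -> W) : Prop :=
  (forall (k : K) a b, h (k *: a + b) = k *: h a + h b) /\
  (forall a b, h (mV a b) = mW (h a) (h b)).

Definition free_LS_B1 (K : pzRingType) (X : Type) (F : lmodType K)
    (mF : F -> F -> F) (iota : X -> F) : Prop :=
  LS_B1_algebra mF /\
  forall (V : lmodType K) (m : V -> V -> V), LS_B1_algebra m ->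
    forall g : X -> V, exists h : F -> V,
      [/\ alg_hom mF m h, (forall x, h (iota x) = g x)
        & forall h' : F -> V, alg_hom mF m h' -> (forall x, h' (iota x) = g x) ->
            forall a, h' a = h a].

Definition anticommutative (K : pzRingType) (V : lmodType K) (br : V -> V -> V) :=
  forall a b, br a b + br b a = 0.

Definition jacobi (K : pzRingType) (V : lmodType K) (br : V -> V -> V) :=
  forall a b c, br (br a b) c + br (br b c) a + br (br c a) b = 0.

(* p is a consequence of anticommutativity and the Jacobi identity:
   it holds in every algebra satisfying these identities (Birkhoff). *)
Definition lie_consequence (K : pzRingType) (p : napoly K) : Prop :=
  forall (V : lmodType K) (br : V -> V -> V),
    bilinear_op br -> anticommutative br -> jacobi br -> is_identity br p.

(* Main.v *)
Require Import Defs.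
From HB Require Import structures.
From mathcomp Require Import all_boot all_order all_algebra.
From mathcomp Require Import boolp functions.
From mathcomp Require Import ring zify.
Import GRing.Theory.
Local Open Scope ring_scope.

Section TAlg.
Variable K : fieldType.
Hypothesis char0 : [pchar K] =i pred0.

Definition T := seq nat -> K^o.

Definition amul (f g : T) : T := fun w =>
  match w with
  | [:: a; b] => f [:: a] * g [:: b]
  | [:: a; b; c] => f [:: a] * g [:: b; c] + f [:: a; b] * g [:: c]
  | [:: a; b; c; d] => f [:: a] * g [:: b; c; d] + f [:: a; b] * g [:: c; d]
                       + f [:: a; b; c] * g [:: d]
  | _ => 0
  end.

Definition lsp (f g : T) : T := fun w =>
  match w with
  | [:: a; b] =>
      - 1 * f [:: b] * g [:: a]
  | [:: a; b; c] =>
      1 * f [:: a] * g [:: b; c]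
      + 1 * f [:: c] * g [:: b; a]
      + 1 * f [:: a; b] * g [:: c]
      + 1 * f [:: b; a] * g [:: c]
  | [:: a; b; c; d] =>
      (3%:R / 4%:R) * f [:: a] * g [:: b; c; d]
      + (1%:R / 4%:R) * f [:: a] * g [:: b; d; c]
      + (1%:R / 8%:R) * f [:: a] * g [:: c; b; d]
      - (1%:R / 8%:R) * f [:: a] * g [:: d; b; c]
      + (1%:R / 2%:R) * f [:: b] * g [:: a; c; d]
      + (1%:R / 8%:R) * f [:: c] * g [:: a; d; b]
      - (1%:R / 8%:R) * f [:: d] * g [:: a; c; b]
      - (3%:R / 8%:R) * f [:: b] * g [:: c; a; d]
      + (7%:R / 8%:R) * f [:: b] * g [:: d; a; c]
      + (1%:R / 4%:R) * f [:: c] * g [:: d; a; b]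
      + (3%:R / 4%:R) * f [:: d] * g [:: c; a; b]
      + (1%:R / 2%:R) * f [:: b] * g [:: c; d; a]
      + (1%:R / 8%:R) * f [:: c] * g [:: b; d; a]
      + (7%:R / 8%:R) * f [:: d] * g [:: b; c; a]
      + (1%:R / 4%:R) * f [:: a; b] * g [:: c; d]
      - (1%:R / 4%:R) * f [:: a; b] * g [:: d; c]
      - (1%:R / 4%:R) * f [:: a; c] * g [:: b; d]
      - (3%:R / 4%:R) * f [:: a; d] * g [:: b; c]
      - 1 * f [:: a; d] * g [:: c; b]
      - (1%:R / 4%:R) * f [:: c; a] * g [:: b; d]
      - (3%:R / 4%:R) * f [:: d; a] * g [:: b; c]
      - 1 * f [:: d; a] * g [:: c; b]
      - (3%:R / 4%:R) * f [:: b; c] * g [:: a; d]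
      - (1%:R / 4%:R) * f [:: b; d] * g [:: a; c]
      - 1 * f [:: c; b] * g [:: a; d]
      - (3%:R / 4%:R) * f [:: c; d] * g [:: a; b]
      - (1%:R / 4%:R) * f [:: d; c] * g [:: a; b]
      - (3%:R / 4%:R) * f [:: b; c] * g [:: d; a]
      - (1%:R / 4%:R) * f [:: b; d] * g [:: c; a]
      - 1 * f [:: c; b] * g [:: d; a]
      + 1 * f [:: a; b; c] * g [:: d]
      - (1%:R / 8%:R) * f [:: a; c; b] * g [:: d]
      + (1%:R / 8%:R) * f [:: a; d; b] * g [:: c]
      + (1%:R / 2%:R) * f [:: a; c; d] * g [:: b]
      + (3%:R / 4%:R) * f [:: c; a; b] * g [:: d]
      + (1%:R / 4%:R) * f [:: d; a; b] * g [:: c]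
      - (3%:R / 8%:R) * f [:: c; a; d] * g [:: b]
      + (7%:R / 8%:R) * f [:: d; a; c] * g [:: b]
      + (7%:R / 8%:R) * f [:: b; c; a] * g [:: d]
      + (1%:R / 8%:R) * f [:: b; d; a] * g [:: c]
      + (1%:R / 2%:R) * f [:: c; d; a] * g [:: b]
      - (1%:R / 4%:R) * f [:: b; c; d] * g [:: a]
      + (1%:R / 4%:R) * f [:: b; d; c] * g [:: a]
      + (1%:R / 8%:R) * f [:: c; b; d] * g [:: a]
      - (1%:R / 8%:R) * f [:: d; b; c] * g [:: a]
  | _ => 0
  end.

Lemma fsubE (f g : T) w : (f - g) w = f w - g w. Proof. by []. Qed.
Lemma faddE (f g : T) w : (f + g) w = f w + g w. Proof. by []. Qed.
Lemma fscaleE (k : K) (f : T) w : (k *: f) w = k * f w. Proof. by []. Qed.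
Lemma fnegE (f : T) w : (- f) w = - f w. Proof. by []. Qed.
Lemma f0E w : (0 : T) w = 0. Proof. by []. Qed.

Lemma natz n : (n.+1%:R : K) != 0.
Proof. by move/pcharf0P: char0 => ->. Qed.

Lemma nz24 : (24%:R : K) != 0.
Proof. by move/pcharf0P: char0 => ->. Qed.
Lemma nz8 : (8%:R : K) != 0.
Proof. by move/pcharf0P: char0 => ->. Qed.

Ltac wcase w := case: w => [|a [|b [|c [|d [|? ?]]]]] /=.

Lemma lsp_comm (f g : T) : lsp f g - lsp g f = amul f g - amul g f.
Proof.
apply/funext => w; wcase w; rewrite !fsubE /=; field; by rewrite ?natz.
Qed.

Lemma lsp_LS : left_symmetric lsp.
Proof.
move=> f g h; rewrite /assoc; apply/funext => w; rewrite !fsubE; wcase w; field; by rewrite ?natz.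
Qed.

Lemma lsp_B1 : identity_B1 lsp.
Proof.
move=> f g h; apply/funext => w; rewrite ?(faddE, fsubE, fnegE, f0E); wcase w; field; by rewrite ?natz.
Qed.

Lemma lsp_bil : bilinear_op lsp.
Proof.
split=> *; apply/funext => w; rewrite ?(faddE, fscaleE); wcase w; rewrite ?(faddE, fscaleE); field; by rewrite ?natz.
Qed.

Lemma lsp_alg : LS_B1_algebra lsp.
Proof. split; [exact: lsp_bil|exact: lsp_LS|exact: lsp_B1]. Qed.

End TAlg.

Section Lie.
Variables (K : fieldType) (V : lmodType K) (br : V -> V -> V).
Hypotheses (Hbil : bilinear_op br) (Hanti : anticommutative br) (Hjac : jacobi br).
Variable e : nat -> V.
Variable N : nat.

Lemma brDl a b c : br (a + b) c = br a c + br b c. Proof. by case: Hbil. Qed.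
Lemma brDr a b c : br a (b + c) = br a b + br a c. Proof. by case: Hbil. Qed.
Lemma brZl (k : K) a b : br (k *: a) b = k *: br a b. Proof. by case: Hbil. Qed.
Lemma brZr (k : K) a b : br a (k *: b) = k *: br a b. Proof. by case: Hbil. Qed.
Lemma br0l b : br 0 b = 0.
Proof. by have := brZl 0 0 b; rewrite !scale0r. Qed.
Lemma br0r a : br a 0 = 0.
Proof. by have := brZr 0 a 0; rewrite !scale0r. Qed.
Lemma brNl a b : br (- a) b = - br a b.
Proof. by rewrite -scaleN1r brZl scaleN1r. Qed.
Lemma brNr a b : br a (- b) = - br a b.
Proof. by rewrite -scaleN1r brZr scaleN1r. Qed.
Lemma brBl a b c : br (a - b) c = br a c - br b c.
Proof. by rewrite brDl brNl. Qed.
Lemma brBr a b c : br a (b - c) = br a b - br a c.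
Proof. by rewrite brDr brNr. Qed.
Lemma br_suml I (r : seq I) (F : I -> V) b :
  br (\sum_(i <- r) F i) b = \sum_(i <- r) br (F i) b.
Proof. exact: (big_morph (br^~ b) (fun x y => brDl x y b) (br0l b)). Qed.
Lemma br_sumr I (r : seq I) (F : I -> V) a :
  br a (\sum_(i <- r) F i) = \sum_(i <- r) br a (F i).
Proof. exact: (big_morph (br a) (brDr a) (br0r a)). Qed.
Lemma br_anti a b : br b a = - br a b.
Proof. by apply/eqP; rewrite -addr_eq0 addrC Hanti. Qed.
Lemma jac2 y a b : br (br y a) b - br (br y b) a = br y (br a b).
Proof.
have := Hjac y a b; rewrite (br_anti y (br a b)) (br_anti y b) brNl => H.
by apply/eqP; rewrite -subr_eq0 -H addrAC.
Qed.

Definition rw (w : seq nat) (y : V) : V := foldl (fun acc a => br acc (e a)) y w.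
Definition th (w : seq nat) : V := if w is a :: w' then rw w' (e a) else 0.

Lemma rwD w a b : rw w (a + b) = rw w a + rw w b.
Proof. by elim: w a b => [|x w IH] a b //=; rewrite brDl IH. Qed.
Lemma rwZ w (k : K) a : rw w (k *: a) = k *: rw w a.
Proof. by elim: w a => [|x w IH] a //=; rewrite brZl IH. Qed.
Lemma rw0 w : rw w 0 = 0.
Proof. by elim: w => [|x w IH] //=; rewrite br0l IH. Qed.
Lemma rw_sum w I (r : seq I) (F : I -> V) :
  rw w (\sum_(i <- r) F i) = \sum_(i <- r) rw w (F i).
Proof. exact: (big_morph (rw w) (rwD w) (rw0 w)). Qed.
Lemma rw_cat u v y : rw (u ++ v) y = rw v (rw u y).
Proof. by rewrite /rw foldl_cat. Qed.
Lemma th_cat u v : u != [::] -> th (u ++ v) = rw v (th u).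
Proof. by case: u => [|a u] //= _; rewrite rw_cat. Qed.

Fixpoint enw (n : nat) : seq (seq nat) :=
  if n is n'.+1 then [seq a :: w | a <- iota 0 N, w <- enw n'] else [:: [::]].

Lemma enw_size {n w} : w \in enw n -> size w = n.
Proof.
elim: n w => [|n IH] w /=; first by rewrite inE => /eqP ->.
by case/allpairsP => [[a u] [/= _ Hu ->]] /=; rewrite IH.
Qed.

Lemma enw_cat k l (F : seq nat -> V) :
  \sum_(w <- enw (k + l)) F w = \sum_(u <- enw k) \sum_(v <- enw l) F (u ++ v).
Proof.
elim: k F => [|k IH] F; first by rewrite big_seq1.
rewrite addSn /= !big_allpairs_dep; apply: eq_bigr => a _.
exact: (IH (fun w => F (a :: w))).
Qed.

Definition Rn n (P : T K) (y : V) : V := \sum_(w <- enw n) (P w : K) *: rw w y.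
Definition Th n (P : T K) : V := \sum_(w <- enw n) (P w : K) *: th w.

Lemma amul_split (f g : T K) w : (0 < size w <= 4)%N ->
  @amul K f g w = \sum_(1 <= k < size w) f (take k w) * g (drop k w).
Proof.
case: w => [|a [|b [|c [|d [|? ?]]]]] //= _;
  rewrite /index_iota /= ?big_cons ?big_nil /= ?addr0 //.
by rewrite addrA.
Qed.

Lemma enw_nil {n w} : (0 < n)%N -> w \in enw n -> w != [::].
Proof. by move=> n0 /enw_size; case: w => //= Hn; move: n0; rewrite -Hn. Qed.

Lemma Rn_amul n (f g : T K) y : (0 < n <= 4)%N ->
  Rn n (@amul K f g) y = \sum_(1 <= k < n) Rn (n - k) g (Rn k f y).
Proof.
move=> Hn; rewrite /Rn.
under eq_big_seq => w Hw.
  rewrite amul_split (enw_size Hw) //= scaler_suml.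
  over.
rewrite exchange_big /=; apply: eq_big_nat => k /andP[k1 kn].
have -> : enw n = enw (k + (n - k)) by rewrite subnKC // ltnW.
rewrite enw_cat.
under eq_big_seq => u Hu.
  under eq_bigr => v _.
    rewrite take_size_cat ?(enw_size Hu) // drop_size_cat ?(enw_size Hu) //.
    rewrite rw_cat.
    over.
  over.
rewrite exchange_big /=; apply: eq_bigr => v _.
rewrite rw_sum scaler_sumr; apply: eq_bigr => u _.
by rewrite rwZ scalerA mulrC.
Qed.

Lemma Th_amul n (f g : T K) : (0 < n <= 4)%N ->
  Th n (@amul K f g) = \sum_(1 <= k < n) Rn (n - k) g (Th k f).
Proof.
move=> Hn; rewrite /Th /Rn.
under eq_big_seq => w Hw.
  rewrite amul_split (enw_size Hw) //= scaler_suml.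
  over.
rewrite exchange_big /=; apply: eq_big_nat => k /andP[k1 kn].
have -> : enw n = enw (k + (n - k)) by rewrite subnKC // ltnW.
rewrite enw_cat.
under eq_big_seq => u Hu.
  under eq_bigr => v _.
    rewrite take_size_cat ?(enw_size Hu) // drop_size_cat ?(enw_size Hu) //.
    rewrite th_cat ?(enw_nil k1 Hu) //.
    over.
  over.
rewrite exchange_big /=; apply: eq_bigr => v _.
rewrite rw_sum scaler_sumr; apply: eq_bigr => u _.
by rewrite rwZ scalerA mulrC.
Qed.

Lemma RnD n (P Q : T K) y : Rn n (P + Q) y = Rn n P y + Rn n Q y.
Proof. by rewrite /Rn -big_split; apply: eq_bigr => w _; rewrite faddE scalerDl. Qed.
Lemma RnZ n (c : K) (P : T K) y : Rn n (c *: P) y = c *: Rn n P y.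
Proof. by rewrite /Rn scaler_sumr; apply: eq_bigr => w _; rewrite fscaleE scalerA. Qed.
Lemma Rn0 n y : Rn n 0 y = 0.
Proof. by rewrite /Rn big1 // => w _; rewrite f0E scale0r. Qed.
Lemma RnB n (P Q : T K) y : Rn n (P - Q) y = Rn n P y - Rn n Q y.
Proof.
rewrite /Rn -sumrB; apply: eq_bigr => w _; by rewrite fsubE scalerBl.
Qed.
Lemma ThD n (P Q : T K) : Th n (P + Q) = Th n P + Th n Q.
Proof. by rewrite /Th -big_split; apply: eq_bigr => w _; rewrite faddE scalerDl. Qed.
Lemma ThZ n (c : K) (P : T K) : Th n (c *: P) = c *: Th n P.
Proof. by rewrite /Th scaler_sumr; apply: eq_bigr => w _; rewrite fscaleE scalerA. Qed.
Lemma Th0 n : Th n 0 = 0.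
Proof. by rewrite /Th big1 // => w _; rewrite f0E scale0r. Qed.
Lemma ThB n (P Q : T K) : Th n (P - Q) = Th n P - Th n Q.
Proof.
rewrite /Th -sumrB; apply: eq_bigr => w _; by rewrite fsubE scalerBl.
Qed.

Lemma sum_reindex (F : nat -> nat -> V) :
  (forall a b, (4 < a + b)%N -> F a b = 0) ->
  \sum_(1 <= a < 5) \sum_(1 <= b < 5) F a b =
  \sum_(1 <= n < 5) \sum_(1 <= k < n) F k (n - k)%N.
Proof.
move=> HZ; rewrite /index_iota /= !big_cons !big_nil /=.
rewrite (HZ 1 4) // (HZ 2 3) // (HZ 2 4) // (HZ 3 2) // (HZ 3 3) // (HZ 3 4) //.
rewrite (HZ 4 1) // (HZ 4 2) // (HZ 4 3) // (HZ 4 4) // !addr0 !add0r.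
by rewrite !subSS !subn0 -!addrA (addrCA (F 1%N 3%N)).
Qed.

Definition xs (i : nat) : T K := fun w => if w == [:: i] then 1 else 0.
Definition PT (q : napoly K) : T K := peval (commutator (@lsp K)) xs q.

Fixpoint evn (q : napoly K) (n : nat) : V :=
  match q with
  | pVar i => if n == 1%N then e i else 0
  | pZero => 0
  | pAdd q1 q2 => evn q1 n + evn q2 n
  | pScale c q1 => c *: evn q1 n
  | pMul q1 q2 => \sum_(1 <= k < n) br (evn q1 k) (evn q2 (n - k))
  end.

Fixpoint varsb (q : napoly K) : bool :=
  match q with
  | pVar i => (i < N)%N
  | pZero => true
  | pAdd q1 q2 => varsb q1 && varsb q2
  | pScale _ q1 => varsb q1
  | pMul q1 q2 => varsb q1 && varsb q2
  end.

Lemma Rn_var i n y : Rn n (xs i) y = \sum_(w <- enw n) (xs i w : K) *: rw w y.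
Proof. by []. Qed.

Lemma var_claim i n : (i < N)%N ->
  (forall F : seq nat -> V, \sum_(w <- enw n) (xs i w : K) *: F w =
     if n == 1%N then F [:: i] else 0).
Proof.
move=> iN F; case: (n =P 1%N) => [->|n1].
  rewrite big_allpairs_dep /= (bigD1_seq i) ?mem_iota ?iota_uniq //=.
  rewrite big_seq1 /xs eqxx scale1r big1 ?addr0 // => a ai.
  by rewrite big_seq1 eqseq_cons andbT (negbTE ai) scale0r.
rewrite big1_seq // => w /andP[_ Hw]; rewrite /xs.
case: eqP => [Ew|]; last by rewrite scale0r.
by move: (enw_size Hw); rewrite Ew => /esym.
Qed.

Hypothesis char0 : [pchar K] =i pred0.

Lemma claim q : varsb q -> forall n, (0 < n <= 4)%N ->
  (forall y, Rn n (PT q) y = br y (evn q n)) /\ Th n (PT q) = n%:R *: evn q n.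
Proof.
elim: q => [i||q1 IH1 q2 IH2|c q1 IH1|q1 IH1 q2 IH2] /=.
- move=> iN n Hn; split => [y|].
    rewrite /Rn (var_claim _ _ iN (rw^~ y)); case: ifP => _ //=; by rewrite br0r.
  rewrite /Th (var_claim _ _ iN th); case: (n =P 1%N) => [->|_] /=; by rewrite ?scale1r ?scaler0.
- move=> _ n Hn; split => [y|]; by rewrite ?Rn0 ?Th0 ?br0r ?scaler0.
- move=> /andP[v1 v2] n Hn; have [A1 B1] := IH1 v1 n Hn; have [A2 B2] := IH2 v2 n Hn.
  split => [y|]; by rewrite /PT /= ?RnD ?ThD ?A1 ?A2 ?B1 ?B2 ?brDr ?scalerDr.
- move=> v1 n Hn; have [A1 B1] := IH1 v1 n Hn.
  split => [y|]; by rewrite /PT /= ?RnZ ?ThZ ?A1 ?B1 ?brZr // scalerA mulrC -scalerA.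
- move=> /andP[v1 v2] n Hn.
  have Hk : forall k, (1 <= k < n)%N -> (0 < k <= 4)%N /\ (0 < n - k <= 4)%N.
    move=> k /andP[k1 kn]; case/andP: Hn => _ n4.
    by rewrite k1 subn_gt0 kn (leq_trans (ltnW kn) n4) (leq_trans (leq_subr _ _) n4).
  have Hrev : forall (G : nat -> V), \sum_(1 <= k < n) G k = \sum_(1 <= k < n) G (n - k)%N.
    move=> G; rewrite big_nat_rev /=; apply: eq_big_nat => k _.
    by rewrite add1n subSS.
  rewrite /PT /= -/(PT q1) -/(PT q2) /commutator lsp_comm //.
  split => [y|].
    rewrite RnB !Rn_amul // (Hrev (fun k => Rn (n - k) (PT q1) (Rn k (PT q2) y))).
    rewrite -sumrB br_sumr; apply: eq_big_nat => k Hk'.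
    have [h1 h2] := Hk k Hk'; case/andP: Hk' => _ kn.
    rewrite subKn ?(ltnW kn) //.
    rewrite (proj1 (IH1 v1 k h1)) (proj1 (IH2 v2 _ h2)).
    rewrite (proj1 (IH1 v1 k h1)) (proj1 (IH2 v2 _ h2)).
    exact: jac2.
  rewrite ThB !Th_amul // (Hrev (fun k => Rn (n - k) (PT q1) (Th k (PT q2)))).
  rewrite -sumrB scaler_sumr; apply: eq_big_nat => k Hk'.
  have [h1 h2] := Hk k Hk'; case/andP: Hk' => _ kn.
  rewrite subKn ?(ltnW kn) //.
  rewrite (proj2 (IH1 v1 k h1)) (proj2 (IH2 v2 _ h2)).
  rewrite (proj1 (IH1 v1 k h1)) (proj1 (IH2 v2 _ h2)).
  rewrite !brZl (br_anti (evn q1 k)) scalerN opprK -scalerDl -natrD subnKC //.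
  exact: ltnW.
Qed.

Lemma evn_deg q n : (pdeg q < n)%N -> evn q n = 0.
Proof.
elim: q n => [i||q1 IH1 q2 IH2|c q1 IH1|q1 IH1 q2 IH2] n /=.
- by case: (n =P 1%N) => [->|].
- by [].
- by rewrite gtn_max => /andP[h1 h2]; rewrite IH1 // IH2 // addr0.
- by move=> h; rewrite IH1 // scaler0.
- move=> h; apply: big1_seq => k /andP[_]; rewrite mem_index_iota => /andP[k1 kn].
  case: (ltnP (pdeg q1) k) => hk; first by rewrite IH1 // br0l.
  rewrite (IH2 (n - k)%N) ?br0r //; lia.
Qed.

Lemma peval_sum q : (pdeg q <= 4)%N -> peval br e q = \sum_(1 <= n < 5) evn q n.
Proof.
elim: q => [i||q1 IH1 q2 IH2|c q1 IH1|q1 IH1 q2 IH2] /=.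
- by move=> _; rewrite /index_iota /= !big_cons big_nil /= !addr0.
- by move=> _; rewrite big1.
- rewrite geq_max => /andP[h1 h2]; by rewrite IH1 // IH2 // big_split.
- by move=> h; rewrite IH1 // scaler_sumr.
- move=> h; have h1 : (pdeg q1 <= 4)%N by apply: leq_trans h; apply: leq_addr.
  have h2 : (pdeg q2 <= 4)%N by apply: leq_trans h; apply: leq_addl.
  rewrite IH1 // IH2 // br_suml.
  rewrite (eq_bigr (fun a => \sum_(1 <= n < 5) br (evn q1 a) (evn q2 n)));
    last by move=> a _; rewrite br_sumr.
  apply: (sum_reindex (fun a b => br (evn q1 a) (evn q2 b))) => a b hab.
  case: (ltnP (pdeg q1) a) => ha; first by rewrite evn_deg // br0l.
  rewrite (evn_deg q2 b) ?br0r //; set d1 := pdeg q1 in h ha *; set d2 := pdeg q2 in h *; lia.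
Qed.

Lemma lie_side p : varsb p -> (pdeg p <= 4)%N -> PT p = 0 -> peval br e p = 0.
Proof.
move=> vp dp P0; rewrite peval_sum //; apply: big1_seq => n /andP[_].
rewrite mem_index_iota => /andP[n1 n5].
have Hn : (0 < n <= 4)%N by rewrite n1.
have := proj2 (@claim p vp n Hn); rewrite P0 Th0 => /esym/eqP.
rewrite scaler_eq0 => /orP[|/eqP //].
by case: n n1 {n5 Hn} => // n _; move/pcharf0P: char0 => ->.
Qed.

End Lie.

Fixpoint maxv {K : Type} (q : napoly K) : nat :=
  match q with
  | pVar i => i
  | pZero => 0
  | pAdd q1 q2 => maxn (maxv q1) (maxv q2)
  | pScale _ q1 => maxv q1
  | pMul q1 q2 => maxn (maxv q1) (maxv q2)
  end.

Lemma varsb_mono {K : fieldType} {N M} {q : napoly K} : (N <= M)%N -> varsb K N q -> varsb K M q.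
Proof.
move=> NM; elim: q => [i||q1 IH1 q2 IH2|c q1 IH1|q1 IH1 q2 IH2] //=.
- by move=> h; apply: leq_trans h NM.
- by case/andP => /IH1 -> /IH2 ->.
- by case/andP => /IH1 -> /IH2 ->.
Qed.

Lemma varsb_maxv (K : fieldType) (q : napoly K) : varsb K (maxv q).+1 q.
Proof.
elim: q => [i||q1 IH1 q2 IH2|c q1 IH1|q1 IH1 q2 IH2] //=;
  by rewrite (varsb_mono _ IH1) ?(varsb_mono _ IH2) // ltnS ?leq_maxl ?leq_maxr.
Qed.

Lemma hom_peval (K : fieldType) (F W : lmodType K) (mF : F -> F -> F) (mW : W -> W -> W)
  (h : F -> W) : alg_hom mF mW h -> forall (E : nat -> F) q,
  h (peval (commutator mF) E q) = peval (commutator mW) (fun i => h (E i)) q.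
Proof.
case=> hlin hmul E.
have h0 : h 0 = 0.
  have := hlin 1 (0 : F) (0 : F); rewrite scale1r addr0 scale1r => H.
  by apply: (addrI (h 0)); rewrite addr0 -H.
have hadd a b : h (a + b) = h a + h b by have := hlin 1 a b; rewrite !scale1r.
have hsc (k : K) a : h (k *: a) = k *: h a by have := hlin k a 0; rewrite !addr0 h0 addr0.
have hsub a b : h (a - b) = h a - h b.
  by have := hlin (-1) b a; rewrite !scaleN1r addrC => ->; rewrite addrC.
elim=> [i||q1 IH1 q2 IH2|c q1 IH1|q1 IH1 q2 IH2] //=.
- by rewrite hadd IH1 IH2.
- by rewrite hsc IH1.
- by rewrite /commutator hsub !hmul IH1 IH2.
Qed.

Theorem mainTheorem8 (K : fieldType) (char0 : [pchar K] =i pred0)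
    (X : Type) (Xinf : exists e : nat -> X, injective e)
    (F : lmodType K) (mF : F -> F -> F) (iota : X -> F)
    (Hfree : free_LS_B1 mF iota)
    (p : napoly K) (Hdeg : (pdeg p <= 4)%N)
    (Hid : is_identity (commutator mF) p) :
  lie_consequence p.
Proof.
case: Hfree => _ Huniv; case: Xinf => ee inj_ee.
pose g (x : X) : T K := match pselect (exists n, ee n = x) with
  | left H => xs K (proj1_sig (cid H)) | right _ => 0 end.
have [h [hhom hg _]] := Huniv _ _ (@lsp_alg K char0) g.
have hx : (fun i => h (iota (ee i))) = xs K.
  apply/funext => i; rewrite hg /g; case: pselect => [H|H]; last first.
    by exfalso; apply: H; exists i.
  by case: cid => n /= /inj_ee ->.
have P0 : PT K p = 0.
  have := @hom_peval K _ _ _ _ _ hhom (fun i => iota (ee i)) p.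
  rewrite Hid hx /PT => <-.
  have := hhom.1 1 (0 : F) (0 : F); rewrite scale1r addr0 scale1r => H.
  by apply: (addrI (h 0)); rewrite addr0 -H.
move=> V br Hb Ha Hj e.
exact: (@lie_side K V br Hb Ha Hj e ((maxv p).+1) char0 p (varsb_maxv K p) Hdeg P0).
Qed.
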